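(* Let $G$ and $H$ be graphs. (i) If $*\in\{\Box,\times,\boxtimes\}$ (Cartesian, direct, or strong product), then $\chi_{\mathrm{so}}(G*H)\leq \chi_{\mathrm{so}}(G)\,\chi_{\mathrm{so}}(H)$. (ii) For the lexicographic product, $\chi_{\mathrm{so}}(G\circ H)\leq \chi_{\mathrm{so}}(G)\,(\chi_{\mathrm{so}}(H+K_1)-1)$.
   Context: All graphs are finite, simple and undirected. A strong odd coloring of a graph $G$ is a proper vertex coloring of $G$ such that for every non-isolated vertex $v$ and every color $c$, either no vertex of the open neighborhood $N_G(v)$ has color $c$, or color $c$ is used on an odd number of vertices of $N_G(v)$; $\chi_{\mathrm{so}}(G)$ is the minimum number of colors in such a coloring. $H+K_1$ denotes the graph obtained from $H$ by adding a new vertex adjacent to all vertices of $H$. All products have vertex set $V_G\times V_H$. Cartesian product $G\Box H$: $(g,h)(g',h')$ is an edge iff ($g=g'$ and $hh'\in E_H$) or ($gg'\in E_G$ and $h=h'$). Direct product $G\times H$: edge iff $gg'\in E_G$ and $hh'\in E_H$. Strong product $G\boxtimes H$: edge iff $(g,h)\neq(g',h')$, $g'\in N[g]$ and $h'\in N[h]$ (closed neighborhoods). Lexicographic product $G\circ H$: edge iff $gg'\in E_G$, or ($g=g'$ and $hh'\in E_H$). *)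

(* Defs.v *)
(* A simple graph is an irreflexive symmetric relation on a finType. *)
From mathcomp Require Import all_boot.
Set Implicit Arguments. Unset Strict Implicit. Unset Printing Implicit Defensive.

Section Defs.
Variable T : finType.
Variable e : rel T.

Definition is_so_coloring (k : nat) (col : {ffun T -> 'I_k}) : bool :=
  [forall x, forall y, e x y ==> (col x != col y)] &&
  [forall v, [exists u, e v u] ==>
     [forall c : 'I_k,
        let n := #|[set u | e v u & col u == c]| in (n == 0) || odd n]].

Definition has_so_coloring (k : nat) : bool :=
  [exists col : {ffun T -> 'I_k}, is_so_coloring col].

(* For an irreflexive
   relation, an injective coloring with #|T| colors is strong odd, so the least
   such k is <= #|T| and is found by this search. *)
Definition chi_so : nat := find has_so_coloring (iota 0 (#|T|.+1)).
End Defs.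

Section Products.
Variables (T U : finType) (e : rel T) (f : rel U).

Definition cart_prod : rel (T * U) := fun x y =>
  ((x.1 == y.1) && f x.2 y.2) || (e x.1 y.1 && (x.2 == y.2)).
Definition direct_prod : rel (T * U) := fun x y =>
  e x.1 y.1 && f x.2 y.2.
Definition strong_prod : rel (T * U) := fun x y =>
  [&& x != y, (x.1 == y.1) || e x.1 y.1 & (x.2 == y.2) || f x.2 y.2].
Definition lex_prod : rel (T * U) := fun x y =>
  e x.1 y.1 || ((x.1 == y.1) && f x.2 y.2).
End Products.

(* H + K_1: add a new vertex (None) adjacent to all vertices of H. *)
Definition add_K1 (U : finType) (f : rel U) : rel (option U) := fun x y =>
  match x, y with
  | Some a, Some b => f a b
  | Some _, None | None, Some _ => true
  | None, None => false
  end.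

(* Main.v *)
Require Import Defs.
From mathcomp Require Import all_boot.
Set Implicit Arguments. Unset Strict Implicit. Unset Printing Implicit Defensive.

Definition odd0 n := (n == 0) || odd n.
Definition good (T C : finType) (e : rel T) (col : T -> C) :=
  (forall x y, e x y -> col x != col y) /\
  (forall v c, odd0 #|[set u | e v u & col u == c]|).

Lemma good_has (T C : finType) (e : rel T) (col : T -> C) :
  good e col -> has_so_coloring e #|C|.
Proof.
case=> Hp Ho; apply/existsP; exists [ffun x => enum_rank (col x)].
apply/andP; split.
- apply/forallP=> x; apply/forallP=> y; apply/implyP=> exy; rewrite !ffunE.
  by rewrite (inj_eq enum_rank_inj) Hp.
- apply/forallP=> v; apply/implyP=> _; apply/forallP=> c /=.
  have -> : [set u | e v u & [ffun x => enum_rank (col x)] u == c]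
           = [set u | e v u & col u == enum_val c].
    by apply/setP=> u; rewrite !inE ffunE (can2_eq enum_rankK enum_valK).
  exact: Ho.
Qed.

Lemma good_id (T : finType) (e : rel T) : irreflexive e -> good e id.
Proof.
move=> irr; split.
- move=> x y exy; apply/negP=> /eqP xy; by rewrite xy irr in exy.
- move=> v c; case evc: (e v c).
  + have -> : [set u | e v u & u == c] = [set c].
      by apply/setP=> u; rewrite !inE; case: eqP => [->|]; rewrite ?evc ?andbF.
    by rewrite cards1.
  + have -> : [set u | e v u & u == c] = set0.
      by apply/setP=> u; rewrite !inE; case: eqP => [->|]; rewrite ?evc ?andbF.
    by rewrite cards0.
Qed.

Lemma chi_le (T : finType) (e : rel T) k :
  irreflexive e -> has_so_coloring e k -> chi_so e <= k.
Proof.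
move=> irr hk; rewrite /chi_so.
case: (leqP k #|T|) => hkT.
  rewrite leqNgt; apply/negP=> /(before_find 0).
  by rewrite nth_iota ?add0n ?hk // ltnS.
apply: leq_trans (find_size _ _) _; by rewrite size_iota.
Qed.

Lemma chi_has (T : finType) (e : rel T) :
  irreflexive e -> has_so_coloring e (chi_so e).
Proof.
move=> irr.
have hT : has (has_so_coloring e) (iota 0 #|T|.+1).
  apply/hasP; exists #|T|; first by rewrite mem_iota add0n ltnS leq0n leqnn.
  exact: (good_has (good_id irr)).
have := nth_find 0 hT; rewrite nth_iota ?add0n //.
by have := hT; rewrite has_find size_iota.
Qed.

Lemma has_good (T : finType) (e : rel T) k :
  has_so_coloring e k -> exists col : T -> 'I_k, good e col.
Proof.
move=> /existsP [col /andP [/forallP Hp /forallP Ho]].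
exists (fun x => col x); split.
- by move=> x y exy; have /forallP/(_ y)/implyP := Hp x; apply.
- move=> v c; case: (boolP [exists u, e v u]) => [ex|].
  + by have /implyP/(_ ex)/forallP/(_ c) := Ho v.
  + rewrite negb_exists => /forallP nv.
    have -> : [set u | e v u & col u == c] = set0.
      by apply/setP=> u; rewrite !inE (negbTE (nv u)).
    by rewrite cards0.
Qed.

Lemma good_irr (T C : finType) (e : rel T) (col : T -> C) :
  good e col -> forall x, e x x = false.
Proof. by case=> P _ x; apply/negbTE/negP=> /P; rewrite eqxx. Qed.

Lemma odd0M m n : odd0 m -> odd0 n -> odd0 (m * n).
Proof.
rewrite /odd0 muln_eq0 oddM.
by case/orP=> [->|->] // /orP [->|->]; rewrite ?orbT.
Qed.

Lemma cart_good (T U C1 C2 : finType) (e : rel T) (f : rel U)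
  (c1 : T -> C1) (c2 : U -> C2) :
  good e c1 -> good f c2 -> good (cart_prod e f) (fun x => (c1 x.1, c2 x.2)).
Proof.
move=> G1 G2; have i1 := good_irr G1; have i2 := good_irr G2.
case: G1 => P1 O1; case: G2 => P2 O2; split.
- move=> [g h] [g' h']; rewrite /cart_prod /= xpair_eqE.
  case/orP=> [/andP [/eqP <- fh] | /andP [eg /eqP <-]].
    by rewrite (negbTE (P2 _ _ fh)) andbF.
  by rewrite (negbTE (P1 _ _ eg)).
- move=> [g h] [a b].
  case: (boolP (c1 g == a)) => ha; case: (boolP (c2 h == b)) => hb.
  + have -> : [set u | cart_prod e f (g, h) u & (c1 u.1, c2 u.2) == (a, b)] = set0.
      apply/setP => -[g' h']; rewrite !inE /cart_prod /= xpair_eqE.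
      apply/negbTE/negP => /andP [/orP [/andP [/eqP <- fh]|/andP [eg /eqP <-]] /andP [ca cb]].
        by move: (P2 _ _ fh); rewrite (eqP hb) (eqP cb) eqxx.
      by move: (P1 _ _ eg); rewrite (eqP ha) (eqP ca) eqxx.
    by rewrite cards0.
  + have -> : [set u | cart_prod e f (g, h) u & (c1 u.1, c2 u.2) == (a, b)]
        = setX [set g] [set u | f h u & c2 u == b].
      apply/setP => -[g' h']; rewrite !inE /cart_prod /= xpair_eqE.
      case: (eqVneq g g') => [<-|ng] /=; first by rewrite i1 ha /= orbF.
      apply/negbTE/negP => /and3P [/andP [eg _] ca _].
      by move: (P1 _ _ eg); rewrite (eqP ha) (eqP ca) eqxx.
    by rewrite cardsX cards1 mul1n.
  + have -> : [set u | cart_prod e f (g, h) u & (c1 u.1, c2 u.2) == (a, b)]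
        = setX [set u | e g u & c1 u == a] [set h].
      apply/setP => -[g' h']; rewrite !inE /cart_prod /= xpair_eqE.
      case: (eqVneq h h') => [<-|nh] /=; first by rewrite i2 hb /= !andbF !andbT.
      rewrite !andbF orbF.
      apply/negbTE/negP => /and3P [/andP [_ fh] _ cb].
      by move: (P2 _ _ fh); rewrite (eqP hb) (eqP cb) eqxx.
    by rewrite cardsX cards1 muln1.
  + have -> : [set u | cart_prod e f (g, h) u & (c1 u.1, c2 u.2) == (a, b)] = set0.
      apply/setP => -[g' h']; rewrite !inE /cart_prod /= xpair_eqE.
      apply/negbTE/negP => /andP [/orP [/andP [/eqP <- fh]|/andP [eg /eqP <-]] /andP [ca cb]].
        by rewrite ca in ha.
      by rewrite cb in hb.
    by rewrite cards0.
Qed.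

Lemma direct_good (T U C1 C2 : finType) (e : rel T) (f : rel U)
  (c1 : T -> C1) (c2 : U -> C2) :
  good e c1 -> good f c2 -> good (direct_prod e f) (fun x => (c1 x.1, c2 x.2)).
Proof.
case=> P1 O1 [P2 O2]; split.
- move=> [g h] [g' h']; rewrite /direct_prod /= xpair_eqE.
  by case/andP=> eg _; rewrite (negbTE (P1 _ _ eg)).
- move=> [g h] [a b].
  have -> : [set u | direct_prod e f (g, h) u & (c1 u.1, c2 u.2) == (a, b)]
        = setX [set u | e g u & c1 u == a] [set u | f h u & c2 u == b].
    apply/setP => -[g' h']; rewrite !inE /direct_prod /= xpair_eqE.
    by rewrite -!andbA; congr (_ && _); rewrite andbCA.
  by rewrite cardsX; apply: odd0M.
Qed.

Lemma closed_odd0 (T C : finType) (e : rel T) (col : T -> C) :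
  good e col -> forall v c, odd0 #|[set u | ((v == u) || e v u) & col u == c]|.
Proof.
move=> [P O] v c; case: (boolP (col v == c)) => hv.
  have -> : [set u | ((v == u) || e v u) & col u == c] = [set v].
    apply/setP=> u; rewrite !inE; case: (eqVneq v u) => [<-|nu] /=.
      by rewrite hv ?eqxx.
    apply/negbTE/negP=> /andP [evu cu].
    by move: (P _ _ evu); rewrite (eqP hv) (eqP cu) eqxx.
  by rewrite cards1.
have -> : [set u | ((v == u) || e v u) & col u == c] = [set u | e v u & col u == c].
  apply/setP=> u; rewrite !inE; case: (eqVneq v u) => [<-|nu] //=.
  by rewrite (negbTE hv) andbF.
exact: O.
Qed.

Lemma strong_good (T U C1 C2 : finType) (e : rel T) (f : rel U)
  (c1 : T -> C1) (c2 : U -> C2) :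
  good e c1 -> good f c2 -> good (strong_prod e f) (fun x => (c1 x.1, c2 x.2)).
Proof.
move=> G1 G2; have M1 := closed_odd0 G1; have M2 := closed_odd0 G2.
case: G1 => P1 O1; case: G2 => P2 O2; split.
- move=> [g h] [g' h']; rewrite /strong_prod /= => /and3P [nn eg fh].
  rewrite xpair_eqE; apply/negP => /andP [/eqP E1 /eqP E2].
  case: (eqVneq g g') eg nn => [<-|ng] /= eg nn.
    case: (eqVneq h h') fh nn => [<-|nh] /= fh nn; first by rewrite eqxx in nn.
    by move: (P2 _ _ fh); rewrite E2 eqxx.
  by move: (P1 _ _ eg); rewrite E1 eqxx.
- move=> [g h] [a b].
  case: (boolP ((c1 g == a) && (c2 h == b))) => hab.
    have -> : [set u | strong_prod e f (g, h) u & (c1 u.1, c2 u.2) == (a, b)] = set0.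
      case/andP: hab => ha hb.
      apply/setP => -[g' h']; rewrite !inE /strong_prod /= !xpair_eqE negb_and.
      apply/negbTE/negP => /andP [/and3P [/orP [ng|nh] /orP [eg|eg] /orP [fh|fh]] /andP [ca cb]].
      * by rewrite eg in ng.
      * by rewrite eg in ng.
      * by move: (P1 _ _ eg); rewrite (eqP ha) (eqP ca) eqxx.
      * by move: (P1 _ _ eg); rewrite (eqP ha) (eqP ca) eqxx.
      * by rewrite fh in nh.
      * by move: (P2 _ _ fh); rewrite (eqP hb) (eqP cb) eqxx.
      * by rewrite fh in nh.
      * by move: (P2 _ _ fh); rewrite (eqP hb) (eqP cb) eqxx.
    by rewrite cards0.
  have -> : [set u | strong_prod e f (g, h) u & (c1 u.1, c2 u.2) == (a, b)]
        = setX [set u | ((g == u) || e g u) & c1 u == a] [set u | ((h == u) || f h u) & c2 u == b].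
    apply/setP => -[g' h']; rewrite !inE /strong_prod /= !xpair_eqE.
    case: (eqVneq g g') => [<-|ng] /=; case: (eqVneq h h') => [<-|nh] /=.
    * by rewrite (negbTE hab).
    * by case: (c1 _ == a); case: (c2 _ == b); rewrite /= ?andbT ?andbF.
    * by case: (c1 _ == a); case: (c2 _ == b); rewrite /= ?andbT ?andbF.
    * by case: (c1 _ == a); case: (c2 _ == b); rewrite /= ?andbT ?andbF.
  by rewrite cardsX; apply: odd0M.
Qed.

Lemma lex_good (T U C1 C2 : finType) (e : rel T) (f : rel U)
  (c1 : T -> C1) (c2 : U -> C2) :
  good e c1 -> good f c2 -> (forall b, odd0 #|[set u | c2 u == b]|) ->
  good (lex_prod e f) (fun x => (c1 x.1, c2 x.2)).
Proof.
move=> G1 G2 K; have i1 := good_irr G1.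
case: G1 => P1 O1; case: G2 => P2 O2; split.
- move=> [g h] [g' h']; rewrite /lex_prod /= xpair_eqE.
  case/orP=> [eg | /andP [/eqP <- fh]].
    by rewrite (negbTE (P1 _ _ eg)).
  by rewrite (negbTE (P2 _ _ fh)) andbF.
- move=> [g h] [a b].
  case: (boolP (c1 g == a)) => ha.
  + have -> : [set u | lex_prod e f (g, h) u & (c1 u.1, c2 u.2) == (a, b)]
        = setX [set g] [set u | f h u & c2 u == b].
      apply/setP => -[g' h']; rewrite !inE /lex_prod /= xpair_eqE.
      case: (eqVneq g g') => [<-|ng] /=; first by rewrite i1 ha.
      rewrite orbF; apply/negbTE/negP => /and3P [eg ca _].
      by move: (P1 _ _ eg); rewrite (eqP ha) (eqP ca) eqxx.
    by rewrite cardsX cards1 mul1n.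
  + have -> : [set u | lex_prod e f (g, h) u & (c1 u.1, c2 u.2) == (a, b)]
        = setX [set u | e g u & c1 u == a] [set u | c2 u == b].
      apply/setP => -[g' h']; rewrite !inE /lex_prod /= xpair_eqE.
      case: (eqVneq g g') => [<-|ng] /=; first by rewrite i1 (negbTE ha) !andbF.
      by rewrite orbF andbA.
    by rewrite cardsX; apply: odd0M.
Qed.

Definition csub (U C : finType) (c3 : option U -> C)
  (P : forall u, c3 (Some u) != c3 None) (u : U) : {x : C | x != c3 None} :=
  exist _ (c3 (Some u)) (P u).

Lemma csub_good (U C : finType) (f : rel U) (c3 : option U -> C)
  (P : forall u, c3 (Some u) != c3 None) :
  good (add_K1 f) c3 -> good f (csub P) /\ (forall b, odd0 #|[set u | csub P u == b]|).
Proof.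
case=> P3 O3; split; first split.
- move=> x y fxy; rewrite -val_eqE /=; exact: (P3 (Some x) (Some y) fxy).
- move=> v c.
  have E : [set o | add_K1 f (Some v) o & c3 o == val c]
      = Some @: [set u | f v u & csub P u == c].
    apply/setP=> -[u|].
      by rewrite (mem_imset _ _ Some_inj) !inE -val_eqE.
    rewrite !inE /= eq_sym (negbTE (valP c)).
    by apply/esym/negbTE/imsetP => -[x _].
  by have := O3 (Some v) (val c); rewrite E card_imset //; exact: Some_inj.
- move=> c.
  have E : [set o | add_K1 f None o & c3 o == val c]
      = Some @: [set u | csub P u == c].
    apply/setP=> -[u|].
      by rewrite (mem_imset _ _ Some_inj) !inE -val_eqE.
    rewrite !inE /=.
    by apply/esym/negbTE/imsetP => -[x _].
  by have := O3 None (val c); rewrite E card_imset //; exact: Some_inj.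
Qed.

Theorem theorem4p2 (T U : finType) (e : rel T) (f : rel U) :
  symmetric e -> irreflexive e -> symmetric f -> irreflexive f ->
  [/\ chi_so (cart_prod e f) <= chi_so e * chi_so f,
      chi_so (direct_prod e f) <= chi_so e * chi_so f,
      chi_so (strong_prod e f) <= chi_so e * chi_so f
    & chi_so (lex_prod e f) <= chi_so e * (chi_so (add_K1 f) - 1)].
Proof.
move=> _ ie _ if_.
have [c1 G1] := has_good (chi_has ie).
have [c2 G2] := has_good (chi_has if_).
have ik : irreflexive (add_K1 f) by move=> [u|] //=; exact: if_.
have [c3 G3] := has_good (chi_has ik).
have cardP : forall a b, #|{: 'I_a * 'I_b}| = a * b.
  by move=> a b; rewrite card_prod !card_ord.
split.
- have G := cart_good G1 G2.
  by rewrite -cardP; apply: chi_le (good_irr G) (good_has G).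
- have G := direct_good G1 G2.
  by rewrite -cardP; apply: chi_le (good_irr G) (good_has G).
- have G := strong_good G1 G2.
  by rewrite -cardP; apply: chi_le (good_irr G) (good_has G).
- have P : forall u, c3 (Some u) != c3 None.
    by move=> u; case: G3 => P3 _; exact: (P3 (Some u) None).
  have [G2' K] := csub_good P G3.
  have G := lex_good G1 G2' K.
  have -> : chi_so (add_K1 f) - 1 = #|{: {x : 'I_(chi_so (add_K1 f)) | x != c3 None}}|.
    rewrite (card_sig (fun x : 'I_(chi_so (add_K1 f)) => x != c3 None)).
    by rewrite subn1 -{1}(card_ord (chi_so (add_K1 f))) -(cardC1 (c3 None)); apply: eq_card.
  by rewrite -{1}(card_ord (chi_so e)) -card_prod; apply: chi_le (good_irr G) (good_has G).
Qed.
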